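(* Let $\mathbf{X}=(X_n)_{n\in\mathbb{N}}$ be a stationary ergodic (scalar or vector) information source with values in a proper interval $I^d\subsetneq\mathbb{R}^d$, $d\ge1$, where for $d>1$ the interval $I^d$ carries the lexicographic order. Then its differential permutation entropy rate equals its differential entropy rate: $h_m^{*}(\mathbf{X})=h_m(\mathbf{X})$.
   Context: For $\Delta>0$, a uniform discretization of $\mathbf{X}$ at resolution $\Delta$ is obtained from a partition $\delta=\{\Delta_1,\ldots,\Delta_N\}$ of $I^d$ into Lebesgue-measurable cells with $\lambda(\Delta_i)=\lambda(I^d)/N=\Delta$ ($\lambda$ = Lebesgue measure), and the discretized source $\mathbf{X}^\Delta=(X_n^\Delta)$ with alphabet $A^\Delta=\{1,\ldots,N\}$ is given by $X_n^\Delta=i$ iff $X_n\in\Delta_i$. Its sequence-space model is $(A^{\Delta\mathbb{N}},\mathcal{Z}^\Delta,m^\Delta,\sigma)$. The metric entropy rate of $\mathbf{X}^\Delta$ is $h_{m^\Delta}(\mathbf{X}^\Delta)=\lim_{L\to\infty}\frac1L H(X^\Delta{}_1^L)$, where $H$ is Shannon entropy (base 2) and $X^\Delta{}_1^L=X_1^\Delta\cdots X_L^\Delta$. The rank variables of the discretized source are $R_n^\Delta=\sum_{i=1}^n\delta(X_i^\Delta\le X_n^\Delta)$ ($\delta(P)=1$ if $P$ holds, $0$ otherwise), and the permutation entropy rate at resolution $\Delta$ is $h^*_{m^\Delta}(\mathbf{X}^\Delta)=\lim_{L\to\infty}\frac{1}{L-1}H(R^\Delta{}_1^L)$. The differential entropy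 rate is $h_m(\mathbf{X})=\lim_{\Delta\to0}\big(h_{m^\Delta}(\mathbf{X}^\Delta)+\log\Delta\big)$ and the differential permutation entropy rate is $h_m^*(\mathbf{X})=\lim_{\Delta\to0}\big(h^*_{m^\Delta}(\mathbf{X}^\Delta)+\log\Delta\big)$. *)

(* Defs.v *)
From HB Require Import structures.
From mathcomp Require Import all_boot all_order all_algebra.
From mathcomp Require Import all_classical all_reals all_analysis.

Set Implicit Arguments.
Unset Strict Implicit.
Unset Printing Implicit Defensive.

Import Order.TTheory GRing.Theory Num.Theory.
Import numFieldNormedType.Exports.

Local Open Scope classical_set_scope.
Local Open Scope ring_scope.

Section Defs.
Variable R : realType.

Section Lebesgue_d.
Variable d : nat.

Definition box (a b : d.-tuple R) : set (d.-tuple R) :=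
  [set x | forall k : 'I_d, tnth a k <= tnth x k <= tnth b k].

Definition box_vol (a b : d.-tuple R) : R :=
  \prod_(k < d) (tnth b k - tnth a k).

Definition lebesgue_outer (A : set (d.-tuple R)) : \bar R :=
  ereal_inf [set s | exists a b : nat -> d.-tuple R,
     [/\ (forall n (k : 'I_d), tnth (a n) k <= tnth (b n) k),
         A `<=` \bigcup_n box (a n) (b n) &
         s = (\sum_(0 <= n <oo) (box_vol (a n) (b n))%:E)%E]].

Definition lebesgue_measurable (A : set (d.-tuple R)) : Prop :=
  forall E : set (d.-tuple R),
    lebesgue_outer E = (lebesgue_outer (E `&` A) + lebesgue_outer (E `&` ~` A))%E.

End Lebesgue_d.

Definition cube (d : nat) (I : set R) : set (d.-tuple R) :=
  [set x | forall k : 'I_d, I (tnth x k)].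

Definition uniform_partition (d N : nat) (Id : set (d.-tuple R))
    (C : 'I_N -> set (d.-tuple R)) : Prop :=
  [/\ (forall i j : 'I_N, i != j -> C i `&` C j = set0),
      \bigcup_(i in [set: 'I_N]) C i = Id,
      (forall i, lebesgue_measurable (C i)) &
      (forall i, (lebesgue_outer (C i) * (N%:R)%:E)%E = lebesgue_outer Id)].

Definition xlog2x (x : R) : R := if x == 0 then 0 else x * (ln x / ln 2).

Definition shannon (U : finType) (p : U -> R) : R := - \sum_(u : U) xlog2x (p u).

Section Source.
Variables (dO : measure_display) (O : measurableType dO)
  (P : probability O R) (T : O -> O) (d : nat) (f : O -> d.-tuple R).

(* X_{k+1}(w) = f (T^k w) *)
Definition X (k : nat) (w : O) : d.-tuple R := f (iter k T w).

Variables (N : nat) (C : 'I_N -> set (d.-tuple R)).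

Definition word_event (L : nat) (w : {ffun 'I_L -> 'I_N}) : set O :=
  [set om | forall k : 'I_L, C (w k) (X k om)].

Definition block_entropy (L : nat) : R :=
  shannon (fun w : {ffun 'I_L -> 'I_N} => fine (P (word_event w))).

Definition metric_entropy_rate : R :=
  limn (fun L => block_entropy L / L%:R).

(* rank variables R_n = #{ i <= n : X_i <= X_n } of a word (n = 1..L,
   encoded by 'I_L; values in {1..L} stored in 'I_L.+1) *)
Definition rank_vec (L : nat) (w : {ffun 'I_L -> 'I_N}) : {ffun 'I_L -> 'I_L.+1} :=
  [ffun n : 'I_L => inord #|[set i : 'I_L | (i <= n)%N && (w i <= w n)%N]|].

Definition rank_event (L : nat) (r : {ffun 'I_L -> 'I_L.+1}) : set O :=
  [set om | exists w : {ffun 'I_L -> 'I_N}, word_event w om /\ rank_vec w = r].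

Definition rank_block_entropy (L : nat) : R :=
  shannon (fun r : {ffun 'I_L -> 'I_L.+1} => fine (P (rank_event r))).

Definition permutation_entropy_rate : R :=
  limn (fun L => rank_block_entropy L / (L.-1)%:R).

End Source.

Definition log2 (x : R) : R := ln x / ln 2.

End Defs.

(* Main.v *)
Require Import Defs.
From HB Require Import structures.
From mathcomp Require Import all_boot all_order all_algebra.
From mathcomp Require Import all_classical all_reals all_analysis.
From mathcomp Require Import lra ring zify.

Import Order.TTheory GRing.Theory Num.Theory.
Import numFieldNormedType.Exports.

Local Open Scope classical_set_scope.
Local Open Scope ring_scope.



Section Ent.
Variable R : realType.

Lemma xlog2xE (x : R) : xlog2x x = x * (ln x / ln 2).
Proof. by rewrite /xlog2x; case: eqP => [->|]; rewrite ?mul0r. Qed.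

Lemma ln2_gt0 : 0 < ln (2:R).
Proof. by apply: ln_gt0; rewrite ltr1n. Qed.

Lemma ln_le_sub1 (x : R) : 0 < x -> ln x <= x - 1.
Proof.
move=> x0; have := @le_ln1Dx R (x - 1); rewrite (addrC 1) subrK; apply.
by rewrite ltrBrDl subrr.
Qed.

Lemma term1 (p q : R) : 0 <= p -> p <= q -> p * ln p <= p * ln q.
Proof.
rewrite le0r => /orP[/eqP->|p0 pq]; first by rewrite !mul0r.
have q0 : 0 < q by apply: lt_le_trans pq.
apply: ler_wpM2l; first exact: ltW. by rewrite ler_ln ?posrE.
Qed.

Lemma term2 (p q M : R) : 0 <= p -> p <= q -> 0 < M ->
  p * ln q - p * ln p <= q / M - p + p * ln M.
Proof.
move=> p0' pq M0; move: p0'; rewrite le0r => /orP[/eqP p00|p0].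
  subst p; by rewrite !mul0r !subr0 addr0; exact: divr_ge0 pq (ltW M0).
have q0 : 0 < q by apply: lt_le_trans pq.
have pM : 0 < p * M by rewrite mulr_gt0.
have := @ln_le_sub1 _ (divr_gt0 q0 pM).
rewrite ln_div ?posrE // lnM ?posrE //.
move=> h; have h2 := ler_wpM2l (ltW p0) h.
have e : p * (q / (p * M) - 1) = q / M - p.
  rewrite mulrBr mulr1; congr (_ - _); by field; rewrite !gt_eqF.
rewrite e mulrBr mulrDr in h2.
move: h2; set a := p * ln q; set b := p * ln p; set c := p * ln M; set z := q / M.
move=> h2; lra.
Qed.


Lemma fib_bounds (U : finType) (A : pred U) (p : U -> R) (M : R) :
  (forall u, 0 <= p u) -> 0 < M -> #|A|%:R <= M ->
  \sum_(u in A) p u * ln (p u) <= (\sum_(u in A) p u) * ln (\sum_(u in A) p u) /\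
  (\sum_(u in A) p u) * ln (\sum_(u in A) p u) <=
     \sum_(u in A) p u * ln (p u) + (\sum_(u in A) p u) * ln M.
Proof.
move=> p0 M0 AM; set q := \sum_(u in A) p u.
have q0 : 0 <= q by apply: sumr_ge0 => u _.
have pq : forall u, u \in A -> p u <= q.
  by move=> u Au; rewrite /q (bigD1 u Au) /= lerDl sumr_ge0.
split.
  rewrite {2}/q mulr_suml; apply: ler_sum => u Au; apply: term1; [exact: p0|exact: pq].
have h : \sum_(u in A) (p u * ln q - p u * ln (p u)) <=
         \sum_(u in A) (q / M - p u + p u * ln M).
  by apply: ler_sum => u Au; apply: term2; [exact: p0|exact: pq|exact: M0].
rewrite sumrB big_split /= sumrB -!mulr_suml -/q sumr_const in h.
have hM : q *+ #|A| / M <= q.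
  rewrite -mulr_natr -mulrA -{2}(mulr1 q); apply: ler_wpM2l => //.
  by rewrite ler_pdivrMr // mul1r.
move: h hM; set a := q * ln q; set b := \sum_(u in A) p u * ln (p u).
set c := q * ln M; set z := q *+ #|A| / M.
move=> h hM; lra.
Qed.

Lemma shannonE (U : finType) (p : U -> R) :
  shannon p = - (\sum_u p u * ln (p u)) / ln 2.
Proof.
rewrite /shannon mulNr; congr (- _).
rewrite mulr_suml; apply: eq_bigr => u _; by rewrite xlog2xE mulrA.
Qed.

Lemma shannon_ge0 (U : finType) (p : U -> R) :
  (forall u, 0 <= p u <= 1) -> 0 <= shannon p.
Proof.
move=> hp; rewrite shannonE; apply: divr_ge0; last exact: ltW ln2_gt0.
rewrite oppr_ge0; apply: sumr_le0 => u _.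
have /andP[h0 h1] := hp u.
by apply: mulr_ge0_le0 => //; apply: ln_le0.
Qed.

Lemma shannon_group (U V : finType) (g : U -> V) (p : U -> R) (M : R) :
  (forall u, 0 <= p u) -> \sum_u p u <= 1 -> 1 <= M ->
  (forall v, #|[pred u | g u == v]|%:R <= M) ->
  shannon (fun v => \sum_(u | g u == v) p u) <= shannon p /\
  shannon p <= shannon (fun v => \sum_(u | g u == v) p u) + log2 M.
Proof.
move=> p0 s1 M1 fM.
have M0 : 0 < M by apply: lt_le_trans M1.
have l0 := ln2_gt0.
have part : forall F : U -> R, \sum_u F u = \sum_v \sum_(u | g u == v) F u.
  by move=> F; rewrite (partition_big g predT).
have hb := fun v => @fib_bounds _ [pred u | g u == v] p M p0 M0 (fM v).
rewrite !shannonE /log2 (part (fun u => p u * ln (p u))).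
have Q1 : \sum_v \sum_(u | g u == v) p u <= 1 by rewrite -part.
have lM : 0 <= ln M by apply: ln_ge0.
have S1 : \sum_v \sum_(u | g u == v) p u * ln (p u) <=
          \sum_v (\sum_(u | g u == v) p u) * ln (\sum_(u | g u == v) p u).
  by apply: ler_sum => v _; case: (hb v).
have S2 : \sum_v (\sum_(u | g u == v) p u) * ln (\sum_(u | g u == v) p u) <=
          \sum_v \sum_(u | g u == v) p u * ln (p u) + ln M.
  apply: le_trans (_ : \sum_v (\sum_(u | g u == v) p u * ln (p u) +
                 (\sum_(u | g u == v) p u) * ln M) <= _).
    by apply: ler_sum => v _; case: (hb v).
  rewrite big_split /= lerD2l -mulr_suml.
  by rewrite -{2}(mul1r (ln M)); apply: ler_wpM2r.
split.
  by apply: ler_wpM2r; [rewrite invr_ge0 ltW|rewrite lerN2].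
rewrite -mulrDl; apply: ler_wpM2r; first by rewrite invr_ge0 ltW.
move: S2; set a := \sum_v _; set b := \sum_v _; move=> S2; lra.
Qed.

Lemma shannon_le (U : finType) (p : U -> R) (M : R) :
  (forall u, 0 <= p u) -> \sum_u p u <= 1 -> 1 <= M -> #|U|%:R <= M ->
  shannon p <= log2 M + 1 / ln 2.
Proof.
move=> p0 s1 M1 UM.
have M0 : 0 < M by apply: lt_le_trans M1.
have l0 := ln2_gt0.
have [_ hb] := @fib_bounds _ predT p M p0 M0 UM.
set s := \sum_(u in predT) p u in hb.
have ss : s = \sum_u p u by [].
have s0 : 0 <= s by apply: sumr_ge0.
have lM : 0 <= ln M by apply: ln_ge0.
have e1 : - (s * ln s) <= 1.
  move: s0; rewrite le0r => /orP[/eqP->|sp]; first by rewrite mul0r oppr0.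
  have si : 0 < s^-1 by rewrite invr_gt0.
  have := @ln_le_sub1 _ si; rewrite lnV ?posrE // => h.
  have := ler_wpM2l (ltW sp) h; rewrite mulrBr mulfV ?gt_eqF // mulr1 mulrN.
  by move=> h2; apply: le_trans h2 _; rewrite lerBlDr lerDl ltW.
have e2 : s * ln M <= ln M by rewrite -{2}(mul1r (ln M)); apply: ler_wpM2r; rewrite -?ss.
rewrite shannonE /log2 -mulrDl.
apply: ler_wpM2r; first by rewrite invr_ge0 ltW.
have hb' : s * ln s <= \sum_u p u * ln (p u) + s * ln M := hb.
move: hb' e1 e2; set a := \sum_u _; set b := s * ln s; set c := s * ln M.
move=> hb2 e3 e4; lra.
Qed.

End Ent.



Set Implicit Arguments.
Section Comb.
Variables (L N : nat).
Implicit Types w : {ffun 'I_L -> 'I_N}.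

Definition Sw w (n : 'I_L) := [set i : 'I_L | (i <= n)%N && (w i <= w n)%N]%SET.

Lemma in_clset (T : finType) (P : pred T) x : (x \in [set y | P y]) = P x.
Proof. by apply/idP/idP; rewrite in_setE. Qed.

Lemma rank_card w w' : rank_vec w = rank_vec w' -> forall n, #|Sw w n| = #|Sw w' n|.
Proof.
move=> /ffunP h n; have := h n; rewrite !ffunE => /(congr1 (@nat_of_ord _)).
have b : forall (P : pred 'I_L), (#|P| < L.+1)%N.
  by move=> P; rewrite ltnS (leq_trans (max_card _)) // card_ord.
rewrite !inordK ?b // => e.
have E : forall w0, #|Sw w0 n| = #|[set i : 'I_L | (i <= n)%N && (w0 i <= w0 n)%N]|.
  by move=> w0; apply: eq_card => i; rewrite in_clset inE.
by rewrite !E.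
Qed.

Lemma rank_set w w' : rank_vec w = rank_vec w' -> forall n, Sw w n = Sw w' n.
Proof.
move=> hr.
suff H : forall m (n : 'I_L), (n < m)%N -> Sw w n = Sw w' n.
  by move=> n; apply: (H n.+1).
elim=> [|m IH] n //; rewrite ltnS leq_eqVlt => /orP[/eqP nm|]; last exact: IH.
have IH' : forall (a b : 'I_L), (a <= b)%N -> (b < n)%N ->
    (w a <= w b)%N = (w' a <= w' b)%N.
  move=> a b ab bn; have := IH b; rewrite -nm => /(_ bn) e.
  by move/setP: e => /(_ a); rewrite /Sw !inE ab.
have key : forall (v v' : {ffun 'I_L -> 'I_N}),
    (forall (a b : 'I_L), (a <= b)%N -> (b < n)%N -> (v a <= v b)%N = (v' a <= v' b)%N) ->
    ~~ (Sw v n \subset Sw v' n) -> Sw v' n \subset Sw v n.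
  move=> v v' hIH /subsetPn[i]; rewrite !inE => /andP[ia va] /negP nva.
  have nvi : ~~ (v' i <= v' n)%N by apply/negP => q; apply: nva; rewrite ia q.
  apply/fintype.subsetP => j; rewrite !inE => /andP[jn vj]; apply/negPn/negP => /negP nvj.
  have nvj' : ~~ (v j <= v n)%N by apply/negP => q; apply: nvj; rewrite jn q.
  have ilt : (i < n)%N.
    rewrite ltn_neqAle ia andbT; apply/negP => /eqP ii.
    by move: nvi; rewrite (val_inj ii) leqnn.
  have jlt : (j < n)%N.
    rewrite ltn_neqAle jn andbT; apply/negP => /eqP jj.
    by move: nvj'; rewrite (val_inj jj) leqnn.
  case: (leqP i j) => ij.
    have := hIH i j ij jlt.
    have -> : (v i <= v j)%N by move: va nvj'; lia.
    move=> /esym e; move: nvi vj e; lia.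
  have := hIH j i (ltnW ij) ilt.
  have -> : (v' j <= v' i)%N by move: vj nvi; lia.
  move=> e; move: nvj' va e; lia.
have hc := rank_card hr n.
case: (boolP (Sw w n \subset Sw w' n)) => s.
  by apply/eqP; rewrite eqEcard s hc leqnn.
have s' := key w w' IH' s.
apply/esym/eqP; rewrite eqEcard s' hc leqnn //.
Qed.

Lemma rank_rel w w' : rank_vec w = rank_vec w' -> forall (i n : 'I_L),
  (i <= n)%N -> (w i <= w n)%N = (w' i <= w' n)%N.
Proof.
move=> hr i n inn; have e := rank_set hr n.
by move/setP: e => /(_ i); rewrite /Sw !inE inn.
Qed.

Definition lexset w (n : 'I_L) :=
  [set i : 'I_L | if (i <= n)%N then (w i <= w n)%N else (w i < w n)%N]%SET.

Lemma lexset_eq w w' : rank_vec w = rank_vec w' -> forall n, lexset w n = lexset w' n.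
Proof.
move=> hr n; apply/setP => i; rewrite !inE; case: (leqP i n) => h.
  exact: rank_rel hr i n h.
by rewrite !ltnNge (rank_rel hr n i (ltnW h)).
Qed.

Definition cntle w (k : nat) := #|[set i : 'I_L | (w i <= k)%N]%SET|.

Lemma c1 w n (k : nat) : (k < w n)%N -> (cntle w k < #|lexset w n|)%N.
Proof.
move=> kn; apply: proper_card; apply/properP; split.
  apply/fintype.subsetP => i; rewrite !inE => h.
  by case: (leqP i n) => _; lia.
exists n; rewrite !inE ?leqnn //; lia.
Qed.

Lemma c2 w n (k : nat) : (w n <= k)%N -> (#|lexset w n| <= cntle w k)%N.
Proof.
move=> kn; apply: subset_leq_card; apply/fintype.subsetP => i; rewrite !inE.
by case: (leqP i n) => _; lia.
Qed.

Lemma rank_cnt_inj w w' : rank_vec w = rank_vec w' ->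
  (forall k : 'I_N, cntle w k = cntle w' k) -> w = w'.
Proof.
move=> hr hc; apply/ffunP => n; apply/val_inj/eqP; rewrite eqn_leq.
have hl := lexset_eq hr n.
apply/andP; split; rewrite leqNgt; apply/negP => lt.
- have h1 := c1 w n (w' n) lt; have h2 := c2 w' n (w' n) (leqnn _).
  have h3 := hc (w' n); rewrite hl in h1; lia.
- have h1 := c1 w' n (w n) lt; have h2 := c2 w n (w n) (leqnn _).
  have h3 := hc (w n); rewrite hl in h2; lia.
Qed.

Definition cmap w : {ffun 'I_N -> 'I_L.+1} := [ffun k : 'I_N => inord (cntle w k)].

Lemma fiber_card (r : {ffun 'I_L -> 'I_L.+1}) :
  (#|[pred w : {ffun 'I_L -> 'I_N} | rank_vec w == r]| <= L.+1 ^ N)%N.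
Proof.
have -> : (L.+1 ^ N = #|{ffun 'I_N -> 'I_L.+1}|)%N by rewrite card_ffun !card_ord.
apply: (@leq_card_in _ _ cmap) => w w'; rewrite !inE => /eqP h1 /eqP h2 hc.
apply: rank_cnt_inj; first by rewrite h1 h2.
move=> k; have := congr1 (fun g : {ffun 'I_N -> 'I_L.+1} => nat_of_ord (g k)) hc; rewrite /= !ffunE.
have b : forall w0, (cntle w0 k < L.+1)%N.
  by move=> w0; rewrite ltnS (leq_trans (max_card _)) // card_ord.
by rewrite !inordK ?b.
Qed.

End Comb.

Unset Implicit Arguments.


Lemma bigI_mem (T : Type) (I : eqType) (s : seq I) (F : I -> set T) x :
  (\big[setI/setT]_(i <- s) F i) x <-> (forall i, i \in s -> F i x).
Proof.
elim: s => [|a s IH]; first by rewrite big_nil; split.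
rewrite big_cons; split.
  move=> [Fa /IH h] i; rewrite inE => /orP[/eqP->//|]; exact: h.
by move=> h; split; [apply: h; rewrite inE eqxx | apply/IH => i hi; apply: h; rewrite inE hi orbT].
Qed.

Lemma bigU_mem (T : Type) (I : eqType) (s : seq I) (F : I -> set T) x :
  (\big[setU/set0]_(i <- s) F i) x <-> (exists i, i \in s /\ F i x).
Proof.
elim: s => [|a s IH]; first by rewrite big_nil; split => // -[i []].
rewrite big_cons; split.
  case=> [Fa|/IH[i [hi Fi]]]; first by exists a; rewrite inE eqxx.
  by exists i; rewrite inE hi orbT.
move=> [i []]; rewrite inE => /orP[/eqP->|hi Fi]; first by left.
by right; apply/IH; exists i.
Qed.

Section Meas.
Variables (R : realType) (dO : measure_display) (O : measurableType dO)
  (P : probability O R).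

Lemma P_sum (U : eqType) (E : U -> set O) (s : seq U) :
  uniq s -> (forall u, measurable (E u)) ->
  (forall u v, u != v -> E u `&` E v = set0) ->
  P (\big[setU/set0]_(u <- s) E u) = (\sum_(u <- s) P (E u))%E.
Proof.
move=> + mE dE; elim: s => [|a s IH]; first by rewrite !big_nil measure0.
rewrite /= => /andP[nas us]; rewrite !big_cons measureU //.
- by congr (_ + _)%E; exact: (IH us).
- exact: bigsetU_measurable.
apply/seteqP; split => // x [Ea /bigU_mem [i [hi Ei]]].
have ai : a != i by apply: contraNneq nas => ->.
by rewrite -(dE a i ai).
Qed.

Lemma fineP_sum (U : eqType) (E : U -> set O) (s : seq U) :
  uniq s -> (forall u, measurable (E u)) ->
  (forall u v, u != v -> E u `&` E v = set0) ->
  fine (P (\big[setU/set0]_(u <- s) E u)) = \sum_(u <- s) fine (P (E u)).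
Proof.
move=> us mE dE; rewrite P_sum //.
have -> : (\sum_(u <- s) P (E u) = \sum_(u <- s) (fine (P (E u)))%:E)%E.
  by apply: eq_bigr => u _; rewrite fineK // fin_num_measure.
by rewrite sumEFin.
Qed.


Variables (T : O -> O) (d : nat) (f : O -> d.-tuple R) (N : nat)
  (C : 'I_N -> set (d.-tuple R)).
Hypotheses (mT : measurable_fun setT T) (mC : forall i, measurable (f @^-1` C i))
  (dC : forall i j : 'I_N, i != j -> C i `&` C j = set0).

Lemma iter_meas k A : measurable A -> measurable ((iter k T) @^-1` A).
Proof.
elim: k A => [|k IH] A mA //=.
have mTA : measurable (T @^-1` A) by have := mT measurableT A mA; rewrite setTI.
exact: (IH _ mTA).
Qed.

Lemma word_meas L (w : {ffun 'I_L -> 'I_N}) : measurable (word_event T f C w).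
Proof.
have -> : word_event T f C w =
    \big[setI/setT]_(k <- enum 'I_L) ((iter k T) @^-1` (f @^-1` C (w k))).
  apply/seteqP; split => om /=.
    by move=> h; apply/bigI_mem => k _; exact: h k.
  by move/bigI_mem => h k; apply: h; rewrite mem_enum.
apply: bigsetI_measurable => k _; exact: iter_meas.
Qed.

Lemma word_disj L (w w' : {ffun 'I_L -> 'I_N}) :
  w != w' -> word_event T f C w `&` word_event T f C w' = set0.
Proof.
move=> ne.
have /existsP[k hk] : [exists k, w k != w' k].
  apply: contraNT ne; rewrite negb_exists => /forallP h.
  by apply/eqP/ffunP => k; apply/eqP; exact: negbNE (h k).
apply/seteqP; split => // om [h1 h2].
have : (C (w k) `&` C (w' k)) (f (iter k T om)) by split; [exact: h1 k | exact: h2 k].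
by rewrite (dC _ _ hk).
Qed.

Lemma rank_event_eq L (r : {ffun 'I_L -> 'I_L.+1}) :
  rank_event T f C r = \big[setU/set0]_(w <- [seq w <- index_enum _ | rank_vec w == r])
     word_event T f C w.
Proof.
apply/seteqP; split => om.
  move=> [w [hw hr]]; apply/bigU_mem; exists w.
  by rewrite mem_filter hr eqxx mem_index_enum.
move/bigU_mem => [w [hi hw]]; exists w; split => //.
by move: hi; rewrite mem_filter => /andP[/eqP].
Qed.

Definition pw L (w : {ffun 'I_L -> 'I_N}) := fine (P (word_event T f C w)).

Lemma pw_ge0 L w : 0 <= @pw L w.
Proof. by apply: fine_ge0; apply: measure_ge0. Qed.

Lemma q_eq L (r : {ffun 'I_L -> 'I_L.+1}) :
  fine (P (rank_event T f C r)) = \sum_(w | rank_vec w == r) @pw L w.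
Proof.
rewrite rank_event_eq fineP_sum ?filter_uniq ?index_enum_uniq //.
- by rewrite big_filter.
- exact: word_meas.
- exact: word_disj.
Qed.

Lemma sum_pw_le1 L : \sum_w @pw L w <= 1.
Proof.
rewrite /pw -fineP_sum ?index_enum_uniq //; last 2 first.
- exact: word_meas.
- exact: word_disj.
set X := \big[setU/set0]_(_ <- _) _.
have mX : measurable X by apply: bigsetU_measurable => w _; exact: word_meas.
have h := probability_le1 P mX.
by rewrite -lee_fin fineK //; exact: fin_num_measure.
Qed.

Lemma pw_le1 L w : @pw L w <= 1.
Proof.
apply: le_trans (sum_pw_le1 L); rewrite (bigD1 w) //= lerDl.
by apply: sumr_ge0 => *; exact: pw_ge0.
Qed.

Lemma log2_pow (a n : nat) : log2 ((a.+1 ^ n)%:R : R) = n%:R * log2 (a.+1%:R).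
Proof.
rewrite /log2 natrX lnXn; last by rewrite ltr0n.
by rewrite mulr_natl mulrnAl.
Qed.

Lemma Hbounds L :
  [/\ 0 <= block_entropy P T f C L,
      rank_block_entropy P T f C L <= block_entropy P T f C L,
      block_entropy P T f C L <= rank_block_entropy P T f C L + N%:R * log2 (L.+1%:R) &
      block_entropy P T f C L <= L%:R * log2 (N.+1%:R) + 1 / ln 2].
Proof.
have hq : rank_block_entropy P T f C L =
    shannon (fun r : {ffun 'I_L -> 'I_L.+1} => \sum_(w | rank_vec w == r) @pw L w).
  by rewrite /rank_block_entropy; congr shannon; apply: funext => r; rewrite q_eq.
have hx : block_entropy P T f C L = shannon (@pw L) by [].
have M1 : 1 <= ((L.+1 ^ N)%:R : R) by rewrite ler1n expn_gt0.
have FB : forall v : {ffun 'I_L -> 'I_L.+1},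
    #|[pred u : {ffun 'I_L -> 'I_N} | rank_vec u == v]|%:R <= ((L.+1 ^ N)%:R : R).
  by move=> v; rewrite ler_nat; exact: fiber_card.
have [g1 g2] := @shannon_group R _ _ (@rank_vec N L) (@pw L) ((L.+1 ^ N)%:R)
  (@pw_ge0 L) (sum_pw_le1 L) M1 FB.
split.
- by rewrite hx; apply: shannon_ge0 => w; rewrite pw_ge0 pw_le1.
- by rewrite hq hx.
- by rewrite hq hx -log2_pow.
rewrite hx -log2_pow; apply: shannon_le.
- exact: pw_ge0.
- exact: sum_pw_le1.
- by rewrite ler1n expn_gt0.
rewrite ler_nat card_ffun !card_ord.
by elim: (L) => // n IH; rewrite !expnS leq_mul.
Qed.

End Meas.


Section Lim.
Variable R : realType.

Lemma cvg0_eps (f : nat -> R) :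
  (forall e : R, 0 < e -> exists L0, forall L, (L0 <= L)%N -> `|f L| <= e) ->
  f @ \oo --> 0.
Proof.
move=> h; apply/cvgr0Pnorm_le => e e0.
have [L0 hL] := h e e0.
by exists L0 => // L /= /hL.
Qed.

Lemma predn_real (L : nat) : (1 <= L)%N -> (L.-1)%:R = L%:R - 1 :> R.
Proof. by move=> h; rewrite -subn1 natrB. Qed.

Lemma cvg_u : (fun L : nat => 1 / (L.-1)%:R : R) @ \oo --> 0.
Proof.
apply: cvg0_eps => e e0.
have b0 : 0 <= e^-1 by rewrite invr_ge0 ltW.
exists (Num.bound (e^-1)).+2 => L hL.
have hb := archi_boundP b0.
have hL1 : ((Num.bound e^-1)%:R : R) <= (L.-1)%:R.
  by rewrite ler_nat; lia.
have m0 : 0 < (L.-1)%:R :> R by rewrite ltr0n; lia.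
rewrite ger0_norm ?divr_ge0 ?ltW //.
rewrite ltr_pdivrMr // -ltr_pdivrMl // mulr1; exact: (lt_le_trans hb hL1).
Qed.

Lemma cvg_v : (fun L : nat => ln (L.+1%:R : R) / (L.-1)%:R) @ \oo --> 0.
Proof.
apply: cvg0_eps => e e0.
set de := e / 2.
have de0 : 0 < de by rewrite divr_gt0.
set G := `|1 + ln de|.
have G0 : 0 <= G by apply: normr_ge0.
set K := (G + 3 * de) / de.
have K0 : 0 <= K by apply: divr_ge0; [apply: addr_ge0 => //; apply: mulr_ge0 => //; exact: ltW | exact: ltW].
exists (Num.bound K).+2 => L hL.
have hb := archi_boundP K0.
have hL1 : ((Num.bound K)%:R : R) <= L%:R by rewrite ler_nat; lia.
have m0 : 0 < (L.-1)%:R :> R by rewrite ltr0n; lia.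
have lnpos : 0 <= ln (L.+1%:R : R) by apply: ln_ge0; rewrite ler1n.
rewrite ger0_norm ?divr_ge0 ?ltW //.
rewrite ltr_pdivrMr //.
have Lp : 0 < (L.+1%:R : R) by rewrite ltr0n.
have h1 := @ln_le_sub1 _ _ (mulr_gt0 de0 Lp).
rewrite lnM ?posrE // in h1.
have h2 : - (1 + ln de) <= G by rewrite /G -normrN ler_norm.
have KL : K < L%:R by apply: (lt_le_trans hb hL1).
have KL' : G + 3 * de < de * L%:R.
  by move: KL; rewrite /K ltr_pdivrMr // [L%:R * _]mulrC.
rewrite predn_real; last by lia.
have eL : (L.+1%:R : R) = L%:R + 1 by rewrite -natr1.
rewrite eL in h1 lnpos *.
have ee : e = 2 * de by rewrite /de mulrC divfK // pnatr_eq0.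
rewrite ee.
move: h1 h2 KL'; set l := ln _; set t := ln de; set z := L%:R.
move=> h1 h2 KL'.
have : de * (z + 1) = de * z + de by ring.
move=> e1; rewrite e1 in h1.
have : 2 * de * (z - 1) = 2 * (de * z) - 2 * de by ring.
move=> e2; rewrite e2.
set p := de * z in h1 KL' *.
lra.
by apply: ln_gt0; rewrite ltr1n; lia.
Qed.

End Lim.


Section Final.
Variable R : realType.

Lemma ineq (x y D be c m : R) : 0 < m -> 0 <= x -> y <= x -> x <= y + D ->
  x <= (m + 1) * be + c -> 0 <= D -> 0 <= be -> 0 <= c ->
  `|y / m - x / (m + 1)| <= D / m + (be + c) / m.
Proof.
move=> m0 x0 yx xyD xb D0 b0 c0.
have m1 : 0 < m + 1 by rewrite addr_gt0.
set im := m^-1; set in1 := (m + 1)^-1.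
have im0 : 0 < im by rewrite invr_gt0.
have in10 : 0 < in1 by rewrite invr_gt0.
have e1 : im - in1 = im * in1.
  by rewrite /im /in1; field; rewrite ?gt_eqF.
have e2 : (m + 1) * in1 = 1 by rewrite /in1 mulfV ?gt_eqF.
have in1le : in1 <= 1.
  by rewrite /in1 invr_le1 ?unitfE ?gt_eqF // lerDr ltW.
have in1im : in1 <= im.
  by rewrite /in1 /im lef_pV2 ?posrE // lerDl.
have F1 : y * im <= x * im by rewrite ler_wpM2r // ltW.
have F2 : (x - D) * im <= y * im.
  by apply: ler_wpM2r; [exact: ltW | rewrite lerBlDr].
have F3 : x * in1 <= x * im by apply: ler_wpM2l.
have F4 : x * (im * in1) <= ((m + 1) * be + c) * (im * in1).
  by apply: ler_wpM2r => //; apply: mulr_ge0; exact: ltW.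
have F5 : ((m + 1) * be + c) * (im * in1) = be * im + c * im * in1.
  have -> : ((m + 1) * be + c) * (im * in1) = be * im * ((m + 1) * in1) + c * im * in1.
    by ring.
  by rewrite e2 mulr1.
have F6 : c * im * in1 <= c * im.
  rewrite -{2}(mulr1 (c * im)); apply: ler_wpM2l => //; apply: mulr_ge0 => //; exact: ltW.
have F7 : 0 <= D * im by rewrite mulr_ge0 // ltW.
have F8 : 0 <= be * im by rewrite mulr_ge0 // ltW.
have F9 : 0 <= c * im by rewrite mulr_ge0 // ltW.
have E1 : x * im - x * in1 = x * (im * in1) by rewrite -mulrBr e1.
rewrite ler_norml; rewrite -/im -/in1 mulrDl.
move: F1 F2 F3 F4 F5 F6 F7 F8 F9 E1; rewrite mulrBl.
set A1 := x * im; set A2 := x * in1; set B := y * im; set Dm := D * im.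
set P := x * (im * in1); set Q := ((m + 1) * be + c) * (im * in1).
set bm := be * im; set cm := c * im; set cmm := c * im * in1.
move=> *; apply/andP; split; lra.
Qed.


Lemma lim_eq (a b : nat -> R) : (fun L => b L - a L) @ \oo --> 0 -> limn b = limn a.
Proof.
move=> hd.
have h : forall l : R, (a @ \oo --> l) <-> (b @ \oo --> l).
  move=> l; split => h.
    have := cvgD h hd; rewrite addr0.
    have -> : (a + (fun n => b n - a n)) = b by apply: funext => n /=; rewrite addrC subrK.
    by apply; exact: _.
  have := cvgB h hd; rewrite subr0.
  have -> : (b - (fun n => b n - a n)) = a by apply: funext => n /=; rewrite opprB addrC subrK.
  by apply; exact: _.
rewrite /lim /lim_in; congr get; apply: funext => l; apply: propext; split; apply h.
Qed.

Variables (dO : measure_display) (O : measurableType dO) (P : probability O R)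
  (T : O -> O) (d : nat) (f : O -> d.-tuple R) (N : nat)
  (C : 'I_N -> set (d.-tuple R)).
Hypotheses (mT : measurable_fun setT T) (mC : forall i, measurable (f @^-1` C i))
  (dC : forall i j : 'I_N, i != j -> C i `&` C j = set0).

Lemma rates_eq : permutation_entropy_rate P T f C = metric_entropy_rate P T f C.
Proof.
apply: lim_eq.
set A := (N%:R / ln 2 : R); set B := (log2 (N.+1%:R) + 1 / ln 2 : R).
set e := fun L : nat => A * (ln (L.+1%:R : R) / (L.-1)%:R) + B * (1 / (L.-1)%:R).
have he : e @ \oo --> 0.
  have := cvgD (cvgMl_tmp (a:=A) (@cvg_v R)) (cvgMl_tmp (a:=B) (@cvg_u R)).
  rewrite !mulr0 addr0 => H; apply: H; exact: _.
apply: (@squeeze_cvgr _ _ _ _ (fun L => - e L) e); last first.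
- exact: he.
- have := cvgN he; rewrite oppr0 => H; apply: H; exact: _.
exists 2%N => // L /= hL.
have [h0 h1 h2 h3] := @Hbounds R dO O P T d f N C mT mC dC L.
have l0 := @ln2_gt0 R.
have m0 : 0 < (L.-1)%:R :> R by rewrite ltr0n; lia.
have eL : (L%:R : R) = (L.-1)%:R + 1 by rewrite predn_real ?subrK //; lia.
have hb0 : 0 <= log2 (N.+1%:R : R) by apply: divr_ge0; [apply: ln_ge0; rewrite ler1n | exact: ltW].
have D0 : 0 <= N%:R * log2 (L.+1%:R : R).
  by apply: mulr_ge0 => //; apply: divr_ge0; [apply: ln_ge0; rewrite ler1n | exact: ltW].
have c0 : 0 <= 1 / ln 2 :> R by apply: divr_ge0 => //; exact: ltW.
rewrite eL in h3.
have := @ineq _ _ _ _ _ _ m0 h0 h1 h2 h3 D0 hb0 c0.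
rewrite -eL.
have -> : N%:R * log2 (L.+1%:R : R) / (L.-1)%:R + (log2 (N.+1%:R) + 1 / ln 2) / (L.-1)%:R = e L.
  by rewrite /e /A /B /log2; field; rewrite !gt_eqF.
by rewrite ler_norml.
Qed.

End Final.

Theorem theorem2 (R : realType) (dO : measure_display) (O : measurableType dO)
  (P : probability O R) (T : O -> O) (d : nat) (f : O -> d.-tuple R)
  (a b : R) (I : set R)
  (C : forall N : nat, 'I_N -> set (d.-tuple R)) :
  (1 <= d)%N ->
  (* I is a proper (bounded, non-degenerate) interval with endpoints a < b *)
  a < b -> `]a, b[ `<=` I -> I `<=` `[a, b] ->
  (* stationarity (T preserves P) and ergodicity *)
  measurable_fun [set: O] T ->
  (forall A, measurable A -> P (T @^-1` A) = P A) ->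
  (forall A, measurable A -> T @^-1` A = A -> P A = 0%:E \/ P A = 1%:E) ->
  (* the source X_n = f o T^(n-1) with values in I^d *)
  measurable_fun [set: O] f ->
  (forall om, cube (d:=d) I (f om)) ->
  (* uniform discretizations at resolution Delta_N = lambda(I^d)/N *)
  (forall N, (0 < N)%N -> uniform_partition (cube (d:=d) I) (C N)) ->
  (forall N (i : 'I_N), measurable (f @^-1` C N i)) ->
  let Delta N := fine (lebesgue_outer (cube (d:=d) I)) / N%:R in
  forall l : \bar R,
    ((fun N => (permutation_entropy_rate P T f (C N) + log2 (Delta N))%:E)
        @ \oo --> l)
    <->
    ((fun N => (metric_entropy_rate P T f (C N) + log2 (Delta N))%:E)
        @ \oo --> l).

Proof.
move=> hd hab hI1 hI2 mT stat erg mf fcube part mC Delta l.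
have E : forall N, permutation_entropy_rate P T f (C N) = metric_entropy_rate P T f (C N).
  move=> N.
  have dC : forall i j : 'I_N, i != j -> C N i `&` C N j = set0.
    move=> i j; have N0 : (0 < N)%N by apply: leq_ltn_trans (leq0n i) (ltn_ord i).
    by have [dis _ _ _] := part N N0; exact: dis.
  exact: (@rates_eq R dO O P T d f N (C N) mT (mC N) dC).
have -> : (fun N => (permutation_entropy_rate P T f (C N) + log2 (Delta N))%:E) =
          (fun N => (metric_entropy_rate P T f (C N) + log2 (Delta N))%:E).
  by apply: funext => N; rewrite E.
by [].
Qed.
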